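(* Let $\mathbb{K}$ be a positive commutative monoid, $R_1,\dots,R_m$ a collection of $\mathbb{K}$-relations and $k$ a positive integer. The following are equivalent: (1) the collection is $k$-wise consistent; (2) it is $k$-wise consistent up to some cover of $\mathbb{K}$; (3) it is weakly $k$-wise consistent up to some cover of $\mathbb{K}$; (4) it is very weakly $k$-wise consistent up to some covers of $\mathbb{K}$.
   Context: Positive: $p+q=0\Rightarrow p=q=0$. For a finite attribute set $X$ (attributes have domains), a $\mathbb{K}$-relation over $X$ is a map $R$ from $X$-tuples to $K$ with finite support $R'$; $t[Y]$ is restriction; marginals $R[Y](t)=\sum_{r\in R',r[Y]=t}R(r)$. With $R_i$ over $X_i$, the collection is $k$-wise consistent if for every $q\le k$ and $i_1,\dots,i_q\in[m]$ some relation $W$ over $X_{i_1}\cup\dots\cup X_{i_q}$ has $W[X_{i_j}]=R_{i_j}$ for all $j$; globally consistent means this for the whole chosen subcollection. A cover of $\mathbb{K}$ is a pair $(\mathbb{K}^*,h)$, $\mathbb{K}^*$ a positive commutative monoid and $h:\mathbb{K}^*\to\mathbb{K}$ a surjective homomorphism; an $h$-lift of $R$ is a $\mathbb{K}^*$-relation $R^*$ over the same attributes with $h\circ R^*=R$. $k$-wise consistent up to the cover: some $h$-lifts $R_1^*,\dots,R_m^*$ form a $k$-wise consistent collection. Weakly $k$-wise consistent up to the cover: for every $q\le k$ and $i_1,\dots,i_q\in[m]$ there exist $h$-lifts $R^*_{i_1},\dots,R^*_{i_q}$ of $R_{i_1},\dots,R_{i_q}$ forming a globally consistent collection. Very weakly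 $k$-wise consistent up to some covers: for every $q\le k$ and $i_1,\dots,i_q\in[m]$ there exist a cover $h:\mathbb{K}^*\to\mathbb{K}$ (depending on $i_1,\dots,i_q$) and $h$-lifts $R^*_{i_1},\dots,R^*_{i_q}$ forming a globally consistent collection. *)

(* Defs.v *)
From HB Require Import structures.
From mathcomp Require Import all_boot all_order all_algebra.
From mathcomp Require Import finmap.
Set Implicit Arguments. Unset Strict Implicit. Unset Printing Implicit Defensive.
Import GRing.Theory.
Local Open Scope ring_scope.

Definition positive_monoid (K : nmodType) : Prop :=
  forall p q : K, p + q = 0 -> p = 0 /\ q = 0.

Section Relations.
Variables (A : finType) (Dom : A -> choiceType).

(* A (partial) tuple: assigns [Some v] (v in Dom a) to the attributes it is
   defined on and [None] elsewhere.  An X-tuple is defined exactly on X. *)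
Definition tup := {dffun forall a : A, option (Dom a)}.

Definition is_tuple_over (X : {set A}) (t : tup) : bool :=
  [forall a, (t a != None) == (a \in X)].

Definition restr (Y : {set A}) (t : tup) : tup :=
  [ffun a => if a \in Y then t a else None].

Definition krel (K : nmodType) := {fsfun tup -> K with 0}.

Definition rel_over (K : nmodType) (X : {set A}) (R : krel K) : Prop :=
  forall t, R t != 0 -> is_tuple_over X t.

Definition marg (K : nmodType) (Y : {set A}) (R : krel K) (t : tup) : K :=
  \sum_(r <- finsupp R | restr Y r == t) R r.

Definition glob_consistent (K : nmodType) (m : nat) (X : 'I_m -> {set A})
    (R : 'I_m -> krel K) (s : seq 'I_m) : Prop :=
  exists W : krel K, rel_over (\bigcup_(i <- s) X i) W /\
    forall i, i \in s -> forall t, marg (X i) W t = R i t.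

Definition kwise_consistent (K : nmodType) (m : nat) (X : 'I_m -> {set A})
    (R : 'I_m -> krel K) (k : nat) : Prop :=
  forall s : seq 'I_m, (size s <= k)%N -> glob_consistent X R s.

Definition is_cover (K Ks : nmodType) (h : Ks -> K) : Prop :=
  positive_monoid Ks /\ nmod_morphism h /\ (forall y : K, exists x : Ks, h x = y).

Definition is_lift (K Ks : nmodType) (h : Ks -> K) (X : {set A})
    (R : krel K) (Rs : krel Ks) : Prop :=
  rel_over X Rs /\ forall t, h (Rs t) = R t.

Definition kwise_consistent_up_to_cover (K : nmodType) (m : nat)
    (X : 'I_m -> {set A}) (R : 'I_m -> krel K) (k : nat) : Prop :=
  exists (Ks : nmodType) (h : Ks -> K), is_cover h /\
    exists Rs : 'I_m -> krel Ks,
      (forall i, is_lift h (X i) (R i) (Rs i)) /\ kwise_consistent X Rs k.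

Definition weakly_kwise_consistent_up_to_cover (K : nmodType) (m : nat)
    (X : 'I_m -> {set A}) (R : 'I_m -> krel K) (k : nat) : Prop :=
  exists (Ks : nmodType) (h : Ks -> K), is_cover h /\
    forall s : seq 'I_m, (size s <= k)%N ->
      exists Rs : 'I_m -> krel Ks,
        (forall i, i \in s -> is_lift h (X i) (R i) (Rs i)) /\
        glob_consistent X Rs s.

Definition very_weakly_kwise_consistent_up_to_covers (K : nmodType) (m : nat)
    (X : 'I_m -> {set A}) (R : 'I_m -> krel K) (k : nat) : Prop :=
  forall s : seq 'I_m, (size s <= k)%N ->
    exists (Ks : nmodType) (h : Ks -> K), is_cover h /\
      exists Rs : 'I_m -> krel Ks,
        (forall i, i \in s -> is_lift h (X i) (R i) (Rs i)) /\
        glob_consistent X Rs s.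

End Relations.

(* Main.v *)
Require Import Defs.
From HB Require Import structures.
From mathcomp Require Import all_boot all_order all_algebra.
From mathcomp Require Import finmap.
Set Implicit Arguments. Unset Strict Implicit. Unset Printing Implicit Defensive.
Import GRing.Theory.
Local Open Scope fset_scope.

Section Aux.
Variables (A : finType) (Dom : A -> choiceType).

Lemma marg_incl (K : nmodType) Y (f : krel Dom K) (S : {fset tup Dom}) t :
  finsupp f `<=` S ->
  marg Y f t = (\sum_(r <- S) (if restr Y r == t then f r else 0))%R.
Proof.
move=> sub; rewrite /marg big_mkcond /=; apply: big_fset_incl => // x _ xN.
by rewrite (fsfun_dflt xN); case: ifP.
Qed.

Lemma push_cons (K Ks : nmodType) (h : Ks -> K) (hm : nmod_morphism h)
  m (X : 'I_m -> {set A}) (Rs : 'I_m -> krel Dom Ks) (s : seq 'I_m) :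
  glob_consistent X Rs s ->
  exists W : krel Dom K, rel_over (\bigcup_(i <- s) X i) W /\
    forall i, i \in s -> forall t, marg (X i) W t = h (Rs i t).
Proof.
case=> Ws [Wo Wm].
pose W : krel Dom K := [fsfun r in finsupp Ws => h (Ws r)].
have WE r : W r = h (Ws r).
  rewrite /W fsfun_fun; case: ifP => // /negbT rN.
  by rewrite (fsfun_dflt rN) hm.1.
exists W; split.
  move=> t; rewrite WE => Ht; apply: Wo; apply: contraNneq Ht => ->.
  by rewrite hm.1.
move=> i si t; rewrite -Wm //.
rewrite (@marg_incl _ _ _ (finsupp W `|` finsupp Ws)) ?fsubsetUl //.
rewrite (@marg_incl _ _ _ (finsupp W `|` finsupp Ws)) ?fsubsetUr //.
rewrite (big_morph h hm.2 hm.1); apply: eq_bigr => r _.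
by case: ifP; rewrite ?WE ?hm.1.
Qed.
End Aux.

Theorem proposition43 (A : finType) (Dom : A -> choiceType) (K : nmodType)
    (HK : positive_monoid K) (m : nat) (X : 'I_m -> {set A})
    (R : 'I_m -> krel Dom K) (HR : forall i, rel_over (X i) (R i))
    (k : nat) (Hk : (0 < k)%N) :
  [<-> kwise_consistent X R k;
       kwise_consistent_up_to_cover X R k;
       weakly_kwise_consistent_up_to_cover X R k;
       very_weakly_kwise_consistent_up_to_covers X R k].
Proof.
tfae.
- move=> H; exists K, id; split.
    split => //; split => // y; by exists y.
  by exists R; split.
- case=> Ks [h [hc [Rs [Hl Hc]]]]; exists Ks, h; split => // s ss.
  exists Rs; split; [by move=> i _; apply: Hl | exact: Hc].
- case=> Ks [h [hc H]] s ss; exists Ks, h; split => //; exact: H.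
- move=> H s ss; case: (H s ss) => Ks [h [[_ [hm _]] [Rs [Hl Hc]]]].
  case: (push_cons hm Hc) => W [Wo Wm]; exists W; split => // i si t.
  by rewrite Wm // (Hl i si).2.
Qed.
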